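(* Let $(\mathbf{i},\mathbf{a})\in I^m\times\mathbb{C}^m$, let $\pi\in S_m$ be $(\mathbf{i},\mathbf{a})$-admissible, and let $1\le k<m$ with $\ell(\pi s_k)<\ell(\pi)$, where $\ell$ is the Coxeter length and $s_k=(k,k+1)$. Then $s_k$ is $(s_k(\mathbf{i}),s_k(\mathbf{a}))$-admissible.
   Context: $I$ is the vertex set of a finite simple bipartite graph $I=I_{\bar0}\sqcup I_{\bar1}$, with every edge oriented from its even to its odd endpoint; write $i\leftarrow j$ if there is an oriented edge from $j$ to $i$. $S_m$ acts on $m$-tuples by $\pi(\mathbf{a})=(a_{\pi^{-1}(1)},\dots,a_{\pi^{-1}(m)})$. For $(\mathbf{i},\mathbf{a})\in I^m\times\mathbb{C}^m$, distinct indices $k,l$ are not $(\mathbf{i},\mathbf{a})$-switchable if $i_k\leftarrow i_l$ and $a_k=a_l+1$ (checked for the pair in either order), and switchable otherwise. $\pi\in S_m$ is $(\mathbf{i},\mathbf{a})$-admissible if for every non-switchable pair $k,l$, $\pi(k),\pi(l)$ are in the same relative order as $k,l$. *)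

(* Defs.v *)
From HB Require Import structures.
From mathcomp Require Import all_boot all_order all_algebra all_fingroup.
Set Implicit Arguments. Unset Strict Implicit. Unset Printing Implicit Defensive.
Import GRing.Theory Num.Theory.
Local Open Scope ring_scope.

(* Indices 1..m of the paper are represented 0-based by 'I_m. *)

(* Oriented bipartite graph on I: par x = false means x \in I_0bar (even),
   true means odd.  Edges are oriented from even to odd endpoint.
   [arrow e par i j] is "i <- j": there is an oriented edge from j to i. *)
Definition arrow (I : finType) (e : rel I) (par : I -> bool) (i j : I) : bool :=
  [&& e i j, ~~ par j & par i].

Definition pact (T : Type) (m : nat) (pi : 'S_m) (a : 'I_m -> T) : 'I_m -> T :=
  fun k => a ((pi^-1)%g k).

Definition not_switchable (I : finType) (e : rel I) (par : I -> bool)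
  (F : nzRingType) (m : nat) (i : 'I_m -> I) (a : 'I_m -> F) (k l : 'I_m) : bool :=
  (arrow e par (i k) (i l) && (a k == a l + 1))
  || (arrow e par (i l) (i k) && (a l == a k + 1)).

Definition admissible (I : finType) (e : rel I) (par : I -> bool)
  (F : nzRingType) (m : nat) (i : 'I_m -> I) (a : 'I_m -> F) (pi : 'S_m) : Prop :=
  forall k l : 'I_m, k != l -> not_switchable e par i a k l ->
    ((k < l)%N = (pi k < pi l)%N).

Definition coxlen (m : nat) (pi : 'S_m) : nat :=
  #|[set p : 'I_m * 'I_m | (p.1 < p.2)%N && (pi p.2 < pi p.1)%N]|.

(* Simple transposition s_k = (k, k+1) in 1-based indexing, i.e. it swaps the
   0-based positions k-1 and k; identity when out of range. *)
Definition sk (m k : nat) : 'S_m :=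
  match insub k.-1, insub k with
  | Some x, Some y => tperm x y
  | _, _ => 1%g
  end.

(* Composition as functions: (permcomp pi s) x = pi (s x).  In mathcomp,
   (s * pi)%g x = pi (s x). *)
Definition permcomp (m : nat) (pi s : 'S_m) : 'S_m := (s * pi)%g.

(* Main.v *)
Require Import Defs.
From HB Require Import structures.
From mathcomp Require Import all_boot all_order all_algebra all_fingroup.
From mathcomp Require Import zify.
Import GRing.Theory Num.Theory.
Local Open Scope ring_scope.

Ltac natify := repeat match goal with
  | H : ?a <> ?b |- _ =>
      lazymatch type of a with nat => fail | _ =>
        move/eqP: H; rewrite -(inj_eq val_inj) /= => H end
  | H : is_true (?a != ?b) |- _ =>
      lazymatch type of a with nat => fail | _ =>
        rewrite -(inj_eq val_inj) /= in H end
  end.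

Lemma ord_s m (x y p q : 'I_m) : val y = (val x).+1 ->
  ~~ ((p == x) && (q == y)) -> ~~ ((p == y) && (q == x)) ->
  (p < q)%N = (tperm x y p < tperm x y q)%N.
Proof.
move=> hxy; have hh : nat_of_ord y = (nat_of_ord x).+1 := hxy.
case: tpermP => [->|->|hpx hpy]; case: tpermP => [->|->|hqx hqy];
  rewrite ?eqxx /= ?andbT ?andbF // => h1 h2; natify; lia.
Qed.

Lemma cox_ge m (x y : 'I_m) (pi : 'S_m) : val y = (val x).+1 ->
  (pi x < pi y)%N -> (coxlen pi <= coxlen (permcomp pi (tperm x y)))%N.
Proof.
move=> hxy hpi; rewrite /coxlen /permcomp.
set f := fun p : 'I_m * 'I_m => (tperm x y p.1, tperm x y p.2).
have finj : injective f.
  by move=> [p1 p2] [q1 q2] [/perm_inj -> /perm_inj ->].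
rewrite -(card_imset _ finj); apply: subset_leq_card.
apply/subsetP => _ /imsetP [[p1 p2] + ->]; rewrite !inE /= => /andP [h1 h2].
rewrite !permM !tpermK h2 andbT -ord_s //.
  apply/negP => /andP [/eqP e1 /eqP e2]; subst; by rewrite ltnNge ltnW in h2.
apply/negP => /andP [/eqP e1 /eqP e2]; subst. have hh : nat_of_ord y = (nat_of_ord x).+1 := hxy; lia.
Qed.

Theorem lemma5p6 (I : finType) (e : rel I) (par : I -> bool)
  (e_sym : symmetric e) (e_irr : irreflexive e)
  (e_bip : forall x y : I, e x y -> par x != par y)
  (C : numClosedFieldType) (m : nat) (i : 'I_m -> I) (a : 'I_m -> C)
  (pi : 'S_m) (k : nat) :
  admissible e par i a pi ->
  (1 <= k)%N -> (k < m)%N ->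
  (coxlen (permcomp pi (sk m k)) < coxlen pi)%N ->
  admissible e par (pact (sk m k) i) (pact (sk m k) a) (sk m k).
Proof.
move=> adm k1 km.
have hx : (k.-1 < m)%N by lia.
set x := Ordinal hx; set y := Ordinal km.
have hxy : val y = (val x).+1 by rewrite /= prednK.
have -> : sk m k = tperm x y.
  rewrite /sk; case: insubP => [u _ hu|]; last by rewrite hx.
  case: insubP => [v _ hv|]; last by rewrite km.
  by congr tperm; apply: val_inj.
move=> hlt.
have piyx : (pi y < pi x)%N.
  rewrite ltnNge leq_eqVlt; apply/negP => /orP [/eqP/val_inj/perm_inj|].
    by move/(congr1 val); rewrite hxy /=; lia.
  by move=> h; have := @cox_ge _ x y pi hxy h; rewrite leqNgt hlt.
have nsxy : ~~ not_switchable e par i a x y.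
  apply/negP => ns.
  have xy : x != y by apply/eqP => /(congr1 val); rewrite hxy => /n_Sn.
  have xly : (x < y)%N by rewrite -[nat_of_ord y]/(val y) hxy.
  have := adm x y xy ns; rewrite xly => /esym.
  by rewrite ltnNge ltnW.
move=> p q pq ns.
rewrite -ord_s //.
  apply/negP => /andP [/eqP ex /eqP ey]; subst p q.
  move: ns; rewrite /not_switchable /pact tpermV tpermL tpermR orbC.
  by move: nsxy; rewrite /not_switchable => /negPf ->.
apply/negP => /andP [/eqP ex /eqP ey]; subst p q.
move: ns; rewrite /not_switchable /pact tpermV tpermL tpermR.
by move: nsxy; rewrite /not_switchable => /negPf ->.
Qed.
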